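(* Let $n\ge 3$ and let $A \in \mathcal{G}_s^{n\times n}(\{0,t\})$, and write $\det A = \sum_{j=0}^{n} c_j s^{n-j}t^j$ as a polynomial in the indeterminates $s,t$. If the coefficient $c_2$ of $s^{n-2}t^2$ is zero, then the coefficient $c_3$ of $s^{n-3}t^3$ satisfies $|c_3| \le \lfloor n/2\rfloor\,\lfloor (n-1)/2\rfloor$.
   Context: $\mathcal{G}_s^{n\times n}(\{0,t\})$ denotes the set of all $n\times n$ upper Hessenberg matrices $A=(a_{ij})$ with $a_{i+1,i} = s$ for $1\le i\le n-1$, $a_{ij}=0$ for $i > j+1$, and $a_{ij}\in\{0,t\}$ for all $i \le j$. Here $s,t$ are treated as indeterminates, so $\det A$ is a homogeneous polynomial of degree $n$ in $s,t$ with integer coefficients. *)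

(* Defs.v *)
From HB Require Import structures.
From mathcomp Require Import all_boot all_order all_algebra.
Set Implicit Arguments. Unset Strict Implicit. Unset Printing Implicit Defensive.
Import GRing.Theory Num.Theory.
Local Open Scope ring_scope.

(* The bivariate integer polynomial ring Z[s,t] is modelled as {poly {poly int}}:
   the outer variable is t, the inner variable is s. *)
Definition Zst := {poly {poly int}}.

Definition var_s : Zst := ('X : {poly int})%:P.
Definition var_t : Zst := 'X.

Definition in_G_st (n : nat) (A : 'M[Zst]_n) : Prop :=
  forall i j : 'I_n,
    (nat_of_ord i = (nat_of_ord j).+1 -> A i j = var_s) /\
    (((nat_of_ord j).+1 < nat_of_ord i)%N -> A i j = 0) /\
    ((nat_of_ord i <= nat_of_ord j)%N -> A i j = 0 \/ A i j = var_t).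

Definition coef_st (p : Zst) (a b : nat) : int := (p`_b)`_a.

(* Main.v *)
Require Import Defs.
From mathcomp Require Import all_boot all_order all_algebra ring zify.
Import GRing.Theory Num.Theory.
Local Open Scope ring_scope.

Fixpoint Pv (a : nat -> nat -> Zst) (k : nat) : nat -> Zst :=
  match k with
  | 0 => fun _ => 1
  | k'.+1 => fun i => if (i <= k')%N then Pv a k' i
      else \sum_(i' < k'.+1) (- var_s) ^+ (k' - i') * a i' k' * Pv a k' i'
  end.
Definition P a k := Pv a k k.

Lemma Pv_le a k i : (i <= k)%N -> Pv a k i = P a i.
Proof.
elim: k => [|k IH] /=; first by rewrite leqn0 => /eqP ->.
rewrite leq_eqVlt => /orP [/eqP ->|]; first by rewrite /P /= ltnn.
by rewrite ltnS => H; rewrite H IH.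
Qed.

Lemma P_rec a k : P a k.+1 = \sum_(i < k.+1) (- var_s) ^+ (k - i) * a i k * P a i.
Proof.
rewrite /P /= ltnn; apply: eq_bigr => i _; by rewrite Pv_le // -ltnS.
Qed.

Lemma det_hess (a : nat -> nat -> Zst) :
  (forall i j, j.+1 = i -> a i j = var_s) -> (forall i j, (j.+1 < i)%N -> a i j = 0) ->
  forall n (B : 'M[Zst]_n.+1), (forall (i j : 'I_n.+1), (j < n)%N -> B i j = a i j) ->
  \det B = \sum_(i < n.+1) (- var_s) ^+ (n - i) * B i ord_max * P a i.
Proof.
move=> Hs H0; elim=> [|n IH] B HB.
  rewrite (expand_det_row B ord0) !big_ord1 /cofactor det_mx00 /P /=.
  have -> : ord_max = ord0 :> 'I_1 by apply/val_inj.
  by rewrite /= expr0 !mulr1 mul1r.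
have E := expand_det_row B ord_max. rewrite E big_ord_recr /= big_ord_recr /=.
rewrite big1 ?add0r; last first.
  move=> j _; rewrite HB /=; last by rewrite ltnW // ltnS.
  by rewrite H0 ?mul0r //= !ltnS.
rewrite big_ord_recr /= subnn expr0 mul1r [X in _ = _ + X]mulrC; congr (_ + _); last first.
  rewrite /cofactor IH; last first.
    by move=> i j Hj; rewrite !mxE HB !lift_max // ltnW.
  rewrite P_rec addnn -signr_odd odd_double expr0 mul1r mulrC; congr (_ * _).
  by apply: eq_bigr => i _; rewrite !mxE HB !lift_max.
rewrite /cofactor IH; last first.
  move=> i j Hj; rewrite !mxE HB /= /bump ?(leqNgt n.+1) ?ltn_ord ?(leqNgt n) ?Hj //.
  by rewrite add0n ltnW.
rewrite HB // Hs // /= addSn addnn -signr_odd /= odd_double /= expr1 mulN1r mulrN.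
rewrite mulr_sumr -sumrN; apply: eq_bigr => i _.
rewrite !mxE subSn; last by rewrite -ltnS.
rewrite exprS !mulrA mulNr.
rewrite -!mulNr; congr (_ * _ * _); congr (B _ _); apply/val_inj; rewrite /= /bump.
  by rewrite leqNgt ltn_ord.
by rewrite leqnn.
Qed.

Fixpoint N (bb : nat -> nat -> nat) (j k : nat) : nat :=
  match j with
  | 0 => (k == 0)%N
  | j'.+1 => match k with 0 => 0%N | k'.+1 => (\sum_(i < k'.+1) bb i k' * N bb j' i)%N end
  end.

Lemma N_gt bb j k : (k < j)%N -> N bb j k = 0%N.
Proof.
elim: j k => [|j IH] [|k] //= Hk.
rewrite big1 // => i _; rewrite IH ?muln0 //.
by apply: leq_trans (ltn_ord i) _.
Qed.

Lemma coefP (a : nat -> nat -> Zst) bb n :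
  (forall i j, (i <= j)%N -> (j < n)%N -> a i j = (bb i j)%:R * var_t) ->
  forall k, (k <= n)%N -> forall j, (P a k)`_j = (- 'X) ^+ (k - j) * (N bb j k)%:R.
Proof.
move=> Ha; elim/ltn_ind => k IH Hk j.
case: k IH Hk => [|k] IH Hk.
  rewrite /P /= coef1; case: j => [|j] /=; first by rewrite expr0 mulr1.
  by rewrite mulr0.
rewrite P_rec coef_sum.
under eq_bigr => i _ do (rewrite Ha; [|by rewrite -ltnS|by []]).
have E : forall i : 'I_k.+1, (- var_s) ^+ (k - i) * ((bb i k)%:R * var_t) * P a i
   = 'X * (((- 'X) ^+ (k - i) * (bb i k)%:R)%:P * P a i).
  move=> i; rewrite /var_s /var_t rmorphM rmorphXn rmorphN /= -polyC_natr.
  ring.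
under eq_bigr => i _ do rewrite E coefXM coefCM.
case: j => [|j] /=.
  by rewrite big1 // mulr0.
rewrite subSS natr_sum mulr_sumr; apply: eq_bigr => i _.
have Hin : (i <= n)%N by have := ltn_ord i; lia.
rewrite IH // natrM.
case: (leqP j i) => Hji.
  have -> : (k - j = (k - i) + (i - j))%N.
    have := ltn_ord i; lia.
  rewrite exprD; ring.
by rewrite N_gt // !mulr0.
Qed.
Lemma quad_bound (X Y m : nat) : (X + Y <= m)%N -> (X * Y <= m.+1./2 * m./2)%N.
Proof.
move=> H. have E := odd_double_half m.
have U : m.+1./2 = (odd m + m./2)%N by rewrite -uphalf_half.
rewrite U. move: E H U; set q := m./2; set o := odd m => E H U.
have Ho : (o <= 1)%N by case: (o).
have HX : (X * Y <= X * (o + q.*2 - X))%N by rewrite leq_mul2l; lia.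
have K : (q * (q + o) + X * X >= X * (2 * q + o))%N.
  case: (leqP X q) => h. 
    have [d ->] : exists d, q = (X + d)%N by exists (q - X)%N; lia.
    nia.
  have [d ->] : exists d, X = (q + d.+1)%N by exists (X - q.+1)%N; lia.
  nia.
nia.
Qed.

Lemma sum_mono (f : nat -> nat) i j : (i <= j)%N ->
  (\sum_(k < i) f k <= \sum_(k < j) f k)%N.
Proof.
move=> /subnKC <-; elim: (j - i)%N => [|d IH]; rewrite ?addn0 //.
by rewrite addnS big_ord_recr /=; apply: leq_trans IH (leq_addr _ _).
Qed.

Lemma N1 bb i : N bb 1 i.+1 = bb 0%N i.
Proof.
rewrite /= big_ord_recl /= muln1 big1 ?addn0 // => k _; by rewrite muln0.
Qed.

Lemma comb bb m : (forall i j, bb i j <= 1)%N -> N bb 2 m.+1 = 0%N ->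
  (N bb 3 m.+1 <= m.+1./2 * m./2)%N.
Proof.
move=> Hb H2.
pose x i := N bb 1 i.
pose y i := if i == 0%N then 0%N else bb i m.
have x0 : x 0%N = 0%N by [].
have x1 : forall i, (x i <= 1)%N by case=> [|i]; rewrite /x ?N1.
have xy : forall i : 'I_m.+1, (y i * x i = 0)%N.
  move=> i; move: H2; rewrite /= => /eqP; rewrite sum_nat_eq0 => /forallP /(_ i).
  rewrite /y /x; case: (nat_of_ord i) => [|k] /=; first by rewrite muln0.
  by move/eqP.
set X := (\sum_(i < m.+1) x i)%N.
set Y := (\sum_(i < m.+1) y i)%N.
have H3 : (N bb 3 m.+1 <= Y * X)%N.
  rewrite /Y big_distrl /=; apply: leq_sum => i _.
  rewrite /y; case: (nat_of_ord i) (ltn_ord i) => [|k] Hk /=; first by rewrite muln0.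
  apply: leq_mul; first by [].
  apply: leq_trans (_ : \sum_(i' < k.+1) x i' <= X)%N.
    apply: leq_sum => i' _.
    by apply: leq_trans (leq_mul (Hb _ _) (leqnn _)) _; rewrite mul1n.
  by apply: (sum_mono x); rewrite -ltnS ltnW.
have HXY : (X + Y <= m)%N.
  rewrite /X /Y -big_split /= big_ord_recl /= x0 add0n.
  apply: leq_trans (_ : \sum_(i < m) 1 <= m)%N; last by rewrite sum1_card card_ord.
  apply: leq_sum => i _.
  have := xy (lift ord0 i); have := x1 (lift ord0 i); rewrite /y /=.
  have := Hb (bump 0 i) m; move: (x _) (bb _ _) => u v; nia.
apply: leq_trans H3 _; rewrite mulnC; exact: quad_bound.
Qed.

Lemma coef_sign (r c : nat) : ((- 'X : {poly int}) ^+ r * c%:R)`_r = (-1) ^+ r * c%:R.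
Proof.
have -> : (- 'X : {poly int}) ^+ r * c%:R = ((-1) ^+ r * c%:R)%:P * 'X^r.
  by rewrite rmorphM rmorphXn rmorphN1 rmorph_nat exprNn; ring.
by rewrite coefMXn ltnn subnn coefC.
Qed.

Theorem lemma5p6 (n : nat) (A : 'M[Zst]_n) :
  (3 <= n)%N -> in_G_st A ->
  coef_st (\det A) (n - 2) 2 = 0 ->
  (absz (coef_st (\det A) (n - 3) 3) <= n./2 * (n.-1)./2)%N.
Proof.
case: n A => [|m] A // Hn HG.
pose a (i j : nat) : Zst := if (i < m.+1)%N && (j < m.+1)%N then A (inord i) (inord j)
  else if j.+1 == i then var_s else 0.
have Hs : forall i j, j.+1 = i -> a i j = var_s.
  move=> i j Hij; rewrite /a; case: ifP => [/andP [Hi Hj]|]; last by rewrite Hij eqxx.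
  by have [+ _] := HG (inord i) (inord j); apply; rewrite !inordK.
have H0 : forall i j, (j.+1 < i)%N -> a i j = 0.
  move=> i j Hij; rewrite /a; case: ifP => [/andP [Hi Hj]|]; last first.
    by rewrite ltn_eqF.
  by have [_ [+ _]] := HG (inord i) (inord j); apply; rewrite !inordK.
have HB : forall i j : 'I_m.+1, (j < m)%N -> A i j = a i j.
  by move=> i j _; rewrite /a !ltn_ord /= !inord_val.
have HD : \det A = P a m.+1.
  rewrite (@det_hess a Hs H0 m A HB) P_rec; apply: eq_bigr => i _; congr (_ * _ * _).
  rewrite /a ltn_ord ltnSn /= inord_val; congr (A _ _); apply/val_inj; by rewrite /= inordK.
pose bb (i j : nat) : nat := (a i j == var_t).
have Ha : forall i j, (i <= j)%N -> (j < m.+1)%N -> a i j = (bb i j)%:R * var_t.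
  move=> i j Hij Hj; rewrite /bb.
  have [_ [_ +]] := HG (inord i) (inord j); rewrite !inordK ?(leq_ltn_trans Hij) //.
  move/(_ Hij); rewrite /a (leq_ltn_trans Hij Hj) Hj /=.
  case=> ->; rewrite ?eqxx ?mul1r //.
  rewrite eq_sym /var_t polyX_eq0 mul0r //.
have HC : forall j, coef_st (\det A) (m.+1 - j) j = (-1) ^+ (m.+1 - j) * (N bb j m.+1)%:R.
  by move=> j; rewrite /coef_st HD (@coefP a bb m.+1 Ha) // coef_sign.
move: (HC 2%N) (HC 3%N) => -> ->.
move/eqP; rewrite mulf_eq0 signr_eq0 orFb pnatr_eq0 => /eqP H2.
rewrite abszMsign natz absz_nat.
apply: comb H2 => i j; rewrite /bb; by case: (_ == _).
Qed.
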